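(* Let $q$ be a prime power, let $X^2+\mu X+\lambda$ be a primitive polynomial of degree $2$ over $\mathbb F_q$, and let $x=\begin{pmatrix}0&1\\-\lambda&-\mu\end{pmatrix}\in GL_2(q)$, with image $\bar x\in PGL_2(q)$; set $C=\langle \bar x\rangle$ (a Singer cycle) and let $S\le PGL_2(q)$ be the image of the group of invertible upper triangular matrices $\begin{pmatrix}a&b\\0&c\end{pmatrix}$ ($a,c\in\mathbb F_q^*$, $b\in\mathbb F_q$). Consider the right action of $S$ on $C$ given by $s:c\mapsto c^{[s]}$, where $cs=s'c^{[s]}$ with $s'\in S$, $c^{[s]}\in C$. Let $u_1,\dots,u_q$ be the elements of the image $U\le S$ in $PGL_2(q)$ of the matrices $\begin{pmatrix}d&t\\0&d\end{pmatrix}$ ($d\in\mathbb F_q^*$, $t\in\mathbb F_q$). Then $\bar x^{[u_1]},\dots,\bar x^{[u_q]}$ are distinct. In particular the action of $S$ on $C\setminus\{1\}$ is transitive.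
   Context: $PGL_2(q)=CS$ with $C\cap S=1$, so every element $cs$ with $c\in C$, $s\in S$ can be uniquely written as $s'c'$ with $s'\in S$, $c'\in C$, and $c^{[s]}:=c'$ defines a right action of $S$ on $C$. *)

(* Defs.v *)
From HB Require Import structures.
From mathcomp Require Import all_boot all_order all_algebra all_fingroup all_field.
Set Implicit Arguments. Unset Strict Implicit. Unset Printing Implicit Defensive.
Import GRing.Theory.
Local Open Scope ring_scope.

Section PGL2.
Variable F : finFieldType.

Definition GL2 := {'GL_2[F]}.
Definition scal2 : {set GL2} := [set g : GL2 | is_scalar_mx (GLval g)].
Definition PGL2 := coset_of scal2.
Definition proj2 (g : GL2) : PGL2 := coset scal2 g.

(* the matrix M as an element of GL_2(F) (identity if M is singular) *)
Definition toGL (M : 'M[F]_2) : GL2 := insubd (1%g : GL2) M.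

Definition companion2 (mu lam : F) : 'M[F]_2 :=
  \matrix_(i < 2, j < 2)
    if (i == 0 :> nat) then (if (j == 0 :> nat) then 0 else 1)
    else (if (j == 0 :> nat) then - lam else - mu).

Definition upper2 : {set GL2} := [set g : GL2 | GLval g ord_max ord0 == 0].
Definition unipscal2 : {set GL2} :=
  [set g : GL2 | (GLval g ord_max ord0 == 0) && (GLval g ord0 ord0 == GLval g ord_max ord_max)].

Definition Sgrp : {set PGL2} := proj2 @: upper2.
Definition Ugrp : {set PGL2} := proj2 @: unipscal2.

(* c^[s] : the element c' of C with c s = s' c' for some s' in S (1 if none) *)
Definition bract (C : {set PGL2}) (c s : PGL2) : PGL2 :=
  odflt 1%g [pick c' in C | (c * s)%g \in (Sgrp :* c')%g].

End PGL2.

(* Main.v *)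
Require Import Defs.
From HB Require Import structures.
From mathcomp Require Import all_boot all_order all_algebra all_fingroup all_field.
From mathcomp Require Import ring.
Set Implicit Arguments. Unset Strict Implicit. Unset Printing Implicit Defensive.
Import GRing.Theory.
Local Open Scope ring_scope.

Section Aux.
Variable F : finFieldType.
Local Notation GL2 := (GL2 F).
Local Notation i0 := (ord0 : 'I_2).
Local Notation i1 := (ord_max : 'I_2).

Lemma eq10 : (i1 == i0) = false. Proof. by []. Qed.
Lemma eq01 : (i0 == i1) = false. Proof. by []. Qed.

Lemma mul2E (A B : 'M[F]_2) i j :
  (A *m B) i j = A i i0 * B i0 j + A i i1 * B i1 j.
Proof.
rewrite mxE !big_ord_recl big_ord0 addr0.
have -> : lift ord0 (ord0 : 'I_1) = i1 by apply: val_inj.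
by [].
Qed.

Lemma mat2P (A B : 'M[F]_2) :
  A i0 i0 = B i0 i0 -> A i0 i1 = B i0 i1 -> A i1 i0 = B i1 i0 ->
  A i1 i1 = B i1 i1 -> A = B.
Proof.
move=> h1 h2 h3 h4; apply/matrixP => i j.
have E (k : 'I_2) : k = i0 \/ k = i1.
  by case: k => [[|[|k]] Hk] //; [left|right]; apply: val_inj.
by case: (E i) => ->; case: (E j) => ->.
Qed.

Lemma det2_neq0 (B : 'M[F]_2) : B \in unitmx ->
  B i0 i0 * B i1 i1 - B i0 i1 * B i1 i0 != 0.
Proof.
move=> Bu; apply/negP => /eqP d0.
pose K : 'M[F]_2 := \matrix_(i < 2, j < 2)
  if (i == 0 :> nat) then (if (j == 0 :> nat) then B i1 i1 else - B i0 i1)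
  else (if (j == 0 :> nat) then - B i1 i0 else B i0 i0).
have BK : B *m K = 0.
  apply: mat2P; rewrite !mul2E !mxE /=.
  all: rewrite ?mulrN ?mul0rn ?mulr0n.
  - exact d0.
  - ring.
  - ring.
  - rewrite -d0; ring.

have K0 : K = 0 by rewrite -(mulKmx Bu K) BK mulmx0.
have : (1%:M : 'M[F]_2) = 0.
  have B0 : B = 0.
    apply: mat2P; rewrite mxE.
    - by move: (congr1 (fun M : 'M[F]_2 => M i1 i1) K0); rewrite /K !mxE.
    - by move: (congr1 (fun M : 'M[F]_2 => M i0 i1) K0); rewrite /K !mxE /= => /eqP; rewrite oppr_eq0 => /eqP.
    - by move: (congr1 (fun M : 'M[F]_2 => M i1 i0) K0); rewrite /K !mxE /= => /eqP; rewrite oppr_eq0 => /eqP.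
    - by move: (congr1 (fun M : 'M[F]_2 => M i0 i0) K0); rewrite /K !mxE.
  by rewrite -(mulmxV Bu) B0 mul0mx.
by move/(congr1 (fun M : 'M[F]_2 => M i0 i0)); rewrite !mxE /= => /eqP; rewrite oner_eq0.
Qed.


Lemma scal2_gs : group_set (scal2 F).
Proof.
apply/group_setP; split; first by rewrite inE scalar_mx_is_scalar.
move=> x y; rewrite !inE GL_MxE => /is_scalar_mxP[a ->] /is_scalar_mxP[b ->].
by rewrite -scalar_mxM scalar_mx_is_scalar.
Qed.
Canonical scal2_group := Group scal2_gs.

Lemma upper2_gs : group_set (upper2 F).
Proof.
apply/group_setP; split; first by rewrite inE GL_1E mxE.
move=> x y; rewrite !inE GL_MxE => /eqP x0 /eqP y0.
by rewrite mul2E x0 y0 mul0r mulr0 addr0.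
Qed.
Canonical upper2_group := Group upper2_gs.

Lemma unip_gs : group_set (unipscal2 F).
Proof.
apply/group_setP; split; first by rewrite inE GL_1E !mxE eq10 !eqxx.
move=> x y; rewrite !inE GL_MxE => /andP[/eqP x0 /eqP xd] /andP[/eqP y0 /eqP yd].
by rewrite !mul2E x0 y0 xd yd !mul0r !mulr0 !addr0 !add0r !eqxx.
Qed.
Canonical unip_group := Group unip_gs.

Lemma scal2_norm (g : GL2) : g \in ('N(scal2 F))%g.
Proof.
rewrite inE; apply/subsetP => y /imsetP[z zS ->].
move: zS; rewrite !inE conjgE !GL_MxE GL_VxE => /is_scalar_mxP[a ->].
rewrite mul_scalar_mx -scalemxAr mulVmx ?GL_unitmx // scalemx1.
exact: scalar_mx_is_scalar.
Qed.

Lemma proj2M (a b : GL2) : proj2 (a * b)%g = (proj2 a * proj2 b)%g.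
Proof. by rewrite /proj2 coset_morphM ?scal2_norm. Qed.

Lemma proj2V (a : GL2) : proj2 (a^-1)%g = (proj2 a)^-1%g.
Proof. by rewrite /proj2 morphV ?scal2_norm. Qed.

Lemma proj2X (a : GL2) k : proj2 (a ^+ k)%g = (proj2 a ^+ k)%g.
Proof. by rewrite /proj2 morphX ?scal2_norm. Qed.

Lemma proj2_eq (a b : GL2) : (proj2 a = proj2 b) <-> (a * b^-1)%g \in scal2 F.
Proof.
rewrite -mem_rcoset; split => [E|H].
  by apply/rcoset_kercosetP; rewrite ?scal2_norm.
by apply/(rcoset_kercosetP (H:=scal2_group)); rewrite ?scal2_norm.
Qed.

Lemma proj2_scale (a b : GL2) (c : F) : GLval a = c *: GLval b -> proj2 a = proj2 b.
Proof.
move=> E; apply/proj2_eq; rewrite inE GL_MxE GL_VxE E -scalemxAl.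
by rewrite mulmxV ?GL_unitmx // scalemx1 scalar_mx_is_scalar.
Qed.

Lemma GLX (a : GL2) k : GLval (a ^+ k)%g = GLval a ^+ k.
Proof.
elim: k => [|k IH]; first by rewrite expg0 GL_1E expr0.
by rewrite expgS GL_MxE IH exprS.
Qed.


Definition cr (a b : GL2) :=
  GLval a i1 i0 * GLval b i1 i1 - GLval a i1 i1 * GLval b i1 i0.

Lemma scal2_upper : scal2 F \subset upper2 F.
Proof.
apply/subsetP => x; rewrite !inE => /is_scalar_mxP[c ->].
by rewrite mxE eq10 mulr0n.
Qed.

Lemma LLinv (a b : GL2) : ((a * b^-1)%g \in upper2 F) = (cr a b == 0).
Proof.
set M := GLval (a * b^-1)%g.
have Ea : GLval a = M *m GLval b.
  by rewrite /M GL_MxE GL_VxE -mulmxA mulVmx ?GL_unitmx // mulmx1.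
have -> : cr a b = M i1 i0 * (GLval b i0 i0 * GLval b i1 i1 - GLval b i0 i1 * GLval b i1 i0).
  rewrite /cr Ea !mul2E; ring.
by rewrite mulf_eq0 (negPf (det2_neq0 (GL_unitmx b))) orbF inE.
Qed.

Lemma projS (y : GL2) : (proj2 y \in Sgrp F) = (y \in upper2 F).
Proof.
apply/idP/idP; last by move=> yU; apply: imset_f.
case/imsetP => v vU /proj2_eq yv.
have -> : y = ((y * v^-1) * v)%g by rewrite mulgKV.
by rewrite groupM // (subsetP scal2_upper).
Qed.

Lemma memS (a b : GL2) : (proj2 a \in (Sgrp F :* proj2 b)%g) = (cr a b == 0).
Proof. by rewrite mem_rcoset -proj2V -proj2M projS LLinv. Qed.

End Aux.

Section Comp.
Variable F : finFieldType.
Variables mu lam : F.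
Local Notation GL2 := (GL2 F).
Local Notation i0 := (ord0 : 'I_2).
Local Notation i1 := (ord_max : 'I_2).
Local Notation X := (companion2 mu lam).
Local Notation p := ('X^2 + mu *: 'X + lam%:P : {poly F}).

Lemma pE : p = ('X + mu%:P) * 'X + lam%:P.
Proof. by rewrite mulrDl -expr2 mul_polyC. Qed.

Lemma size_p : size p = 3%N.
Proof.
rewrite pE size_MXaddC size_XaddC.
by have -> : ('X + mu%:P == 0) = false by rewrite -size_poly_eq0 size_XaddC.
Qed.

Lemma lam_neq0 : primitive_poly p -> lam != 0.
Proof.
case/primitive_polyP => [[[_ Hirr] _] _ _]; apply/negP => /eqP l0.
have : 'X + mu%:P %= p.
  apply: Hirr; first by rewrite size_XaddC.
  by rewrite pE l0 addr0 dvdp_mulr.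
by move/eqp_size; rewrite size_p size_XaddC.
Qed.

Hypothesis l0 : lam != 0.

Lemma XE : (X i0 i0 = 0) * (X i0 i1 = 1) * (X i1 i0 = - lam) * (X i1 i1 = - mu).
Proof. by rewrite !mxE. Qed.

Lemma X_unit : X \in unitmx.
Proof.
pose Xi : 'M[F]_2 := \matrix_(i < 2, j < 2)
  if (i == 0 :> nat) then (if (j == 0 :> nat) then - mu / lam else - lam^-1)
  else (if (j == 0 :> nat) then 1 else 0).
have : X *m Xi = 1%:M.
  by apply: mat2P; rewrite !mul2E !XE !mxE /= ?eq10 ?eq01 ?eqxx /=; field.
by case/mulmx1_unit.
Qed.

Definition g : GL2 := toGL X.
Lemma gE : GLval g = X.
Proof. by rewrite /g /toGL val_insubd X_unit. Qed.

Lemma abE (a b : F) : ((a *: X + b%:M) i1 i0 = - lam * a) * ((a *: X + b%:M) i1 i1 = - mu * a + b)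
  * ((a *: X + b%:M) i0 i0 = b) * ((a *: X + b%:M) i0 i1 = a).
Proof. by rewrite !mxE /= ?eq10 ?eq01 ?eqxx /= !mulr0n !mulr1n; (repeat split); ring. Qed.


Lemma X2 : X *m X = (- mu) *: X + (- lam)%:M.
Proof. by apply: mat2P; rewrite mul2E !abE !XE; ring. Qed.

Lemma powform k : exists a b, X ^+ k = a *: X + b%:M.
Proof.
elim: k => [|k [a [b IH]]]; first by exists 0, 1; rewrite scale0r add0r expr0.
exists (b - mu * a), (- lam * a); rewrite exprSr IH.
have E : (a *: X + b%:M) *m X = (b - mu * a) *: X + (- lam * a)%:M.
  by apply: mat2P; rewrite mul2E !abE !XE; ring.
exact: E.
Qed.

Lemma hornerp : horner_mx X p = 0.
Proof.
rewrite -mul_polyC !rmorphD rmorphXn rmorphM /= !horner_mx_C horner_mx_X expr2.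
change (X *m X + mu%:M *m X + lam%:M = 0).
by rewrite X2 mul_scalar_mx scaleNr raddfN /= addrAC subrK addNr.
Qed.

Lemma surj (a b : F) : primitive_poly p -> (a != 0) || (b != 0) ->
  exists k, X ^+ k = a *: X + b%:M.
Proof.
move=> Hp ab.
set r := a%:P * 'X + b%:P.
have sr : size r = if (a == 0) && (b == 0) then 0%N else (size a%:P).+1.
  by rewrite /r size_MXaddC polyC_eq0.
have rnz : r != 0.
  by rewrite -size_poly_eq0 sr; case: (a == 0) ab; case: (b == 0).
have rnd : ~~ (p %| r).
  apply/negP => /(dvdp_leq rnz); rewrite size_p sr size_polyC.
  by case: (a == 0) ab; case: (b == 0); case: (a != 0).
have sp : (2 < size p)%N by rewrite size_p.
have := plogp_X sp Hp rnd; set k := plogp p r; case/dvdpP => q E.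
exists k.
have : horner_mx X (r - 'X^k) = 0 by rewrite E rmorphM /= hornerp mulr0.
have hX : horner_mx X 'X = X := horner_mx_X X.
rewrite rmorphB rmorphXn /= hX /r rmorphD rmorphM /= !horner_mx_C hX.
move/eqP; rewrite subr_eq0 => /eqP <-.
congr (_ + _); exact: mul_scalar_mx.
Qed.

End Comp.

Section Main.
Variable F : finFieldType.
Variables mu lam : F.
Local Notation GL2 := (GL2 F).
Local Notation PGL2 := (PGL2 F).
Local Notation i0 := (ord0 : 'I_2).
Local Notation i1 := (ord_max : 'I_2).
Local Notation X := (companion2 mu lam).
Local Notation p := ('X^2 + mu *: 'X + lam%:P : {poly F}).
Hypothesis Hp : primitive_poly p.
Let l0 := lam_neq0 Hp.
Local Notation g := (g mu lam).
Local Notation xb := (proj2 g).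
Local Notation C := (<[xb]>%g).

Lemma Cform c : c \in C -> exists k, c = proj2 (g ^+ k)%g.
Proof. by case/cycleP => k ->; exists k; rewrite proj2X. Qed.

Lemma inC k : proj2 (g ^+ k)%g \in C.
Proof. by rewrite proj2X mem_cycle. Qed.

Lemma gpow k : exists a b, GLval (g ^+ k)%g = a *: X + b%:M.
Proof. by rewrite GLX gE //; apply: powform. Qed.

Lemma bottom_nz (h : GL2) : (GLval h i1 i0 != 0) || (GLval h i1 i1 != 0).
Proof.
have := det2_neq0 (GL_unitmx h).
case: (eqVneq (GLval h i1 i0) 0) => [e|//]; rewrite e mulr0 subr0 /=.
by apply: contra => /eqP ->; rewrite mulr0.
Qed.

Lemma cr_trans (h a b : GL2) : cr h a = 0 -> cr h b = 0 -> cr a b = 0.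
Proof.
move=> ha hb.
have e0 : cr a b * GLval h i1 i0 = cr h b * GLval a i1 i0 - cr h a * GLval b i1 i0.
  by rewrite /cr; ring.
have e1 : cr a b * GLval h i1 i1 = cr h b * GLval a i1 i1 - cr h a * GLval b i1 i1.
  by rewrite /cr; ring.
rewrite ha hb !mul0r subrr in e0 e1.
move/eqP: e0; move/eqP: e1; rewrite !mulf_eq0.
case/orP: (bottom_nz h) => /negPf hn; rewrite hn orbF.
- by move=> _ /eqP.
- by move=> /eqP.
Qed.

Lemma existsk (a : GL2) : exists k, cr a (g ^+ k)%g = 0.
Proof.
set m1 := GLval a i1 i0; set m2 := GLval a i1 i1.
have nz : (m1 != 0) || (mu * m1 - lam * m2 != 0).
  case: (eqVneq m1 0) => //= m10.
  have := bottom_nz a; rewrite -/m1 -/m2 m10 eqxx /= => m2n.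
  by rewrite mulr0 sub0r oppr_eq0 mulf_neq0.
have [k Ek] := surj Hp nz.
exists k; rewrite /cr GLX (@gE _ mu lam l0) Ek !abE -/m1 -/m2; ring.
Qed.

Lemma uniqk (a : GL2) i j : cr a (g ^+ i)%g = 0 -> cr a (g ^+ j)%g = 0 ->
  proj2 (g ^+ i)%g = proj2 (g ^+ j)%g.
Proof.
move=> hi hj; have := cr_trans hi hj.
have [a1 [b1 E1]] := gpow i; have [a2 [b2 E2]] := gpow j.
rewrite /cr E1 E2 !abE => e.
have e' : b1 * a2 = a1 * b2.
  apply: (mulfI l0); apply/eqP; rewrite -subr_eq0; apply/eqP.
  by rewrite -e; ring.
have [c [ca cb]] : exists c, c * a2 = a1 /\ c * b2 = b1.
  case: (eqVneq a2 0) => a20.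
    have b2n : b2 != 0.
      by have := bottom_nz (g ^+ j)%g; rewrite E2 !abE a20 mulr0 eqxx /= mulr0 add0r.
    exists (b1 / b2); split; last by rewrite mulfVK.
    rewrite a20 mulr0; apply/esym/eqP.
    by move: e'; rewrite a20 mulr0 => /esym/eqP; rewrite mulf_eq0 (negPf b2n) orbF.
  exists (a1 / a2); split; first by rewrite mulfVK.
  by rewrite mulrAC -e' mulfK.
apply: (proj2_scale (c := c)); rewrite E1 E2 scalerDr scalerA scale_scalar_mx.
by rewrite ca cb.
Qed.

Lemma bractE (c s c' : PGL2) : c' \in C -> (c * s)%g \in (Sgrp F :* c')%g ->
  bract C c s = c'.
Proof.
move=> c'C H; rewrite /bract; case: pickP => [c'' | none]; last first.
  by move: (none c'); rewrite /= c'C H.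
case/andP => c''C H' /=.
have [k1 E1] := Cform c''C; have [k2 E2] := Cform c'C; rewrite E1 E2.
case: (cosetP (c * s)%g) => y _ Ey; rewrite Ey E2 in H; rewrite Ey E1 in H'.
by apply: (uniqk (a := y)); apply/eqP; rewrite -memS.
Qed.


Lemma cr_sym (a b : GL2) : cr a b = 0 -> cr b a = 0.
Proof. by move=> h; rewrite /cr -[RHS]oppr0 -h /cr; ring. Qed.

End Main.

Definition Sm (F : finFieldType) (be : F) : 'M[F]_2 := \matrix_(i < 2, j < 2)
  if (i == 0 :> nat) then (if (j == 0 :> nat) then 1 else be)
  else (if (j == 0 :> nat) then 0 else 1).

Lemma Sm_unit (F : finFieldType) (be : F) : Sm be \in unitmx.
Proof.
have : Sm be *m Sm (- be) = 1%:M.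
  by apply: mat2P; rewrite !mul2E !mxE /= ?eq10 ?eq01 ?eqxx /=; ring.
by case/mulmx1_unit.
Qed.

Lemma SmE (F : finFieldType) (be : F) : GLval (toGL (Sm be)) = Sm be.
Proof. by rewrite /toGL val_insubd Sm_unit. Qed.


Unset Implicit Arguments.
Local Notation i0 := (ord0 : 'I_2).
Local Notation i1 := (ord_max : 'I_2).

Theorem mainTheorem3 (F : finFieldType) (mu lam : F) :
  primitive_poly ('X^2 + mu *: 'X + lam%:P) ->
  let xb := proj2 (toGL (companion2 mu lam)) in
  let C := <[xb]>%g in
  {in Ugrp F &, injective (fun u => bract C xb u)} /\
  (forall c1 c2, c1 \in (C :\ 1%g) -> c2 \in (C :\ 1%g) ->
     exists2 s, s \in Sgrp F & bract C c1 s = c2).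
Proof.
move=> Hp xb C.
have l0 := lam_neq0 Hp.
have gEE := @gE _ mu lam l0.
split.
- move=> u1 u2 /imsetP[w1 w1U ->] /imsetP[w2 w2U ->] /= E.
  have [k1 h1] := existsk Hp (g mu lam * w1)%g.
  have [k2 h2] := existsk Hp (g mu lam * w2)%g.
  have b1 : bract C xb (proj2 w1) = proj2 (g mu lam ^+ k1)%g.
    by apply: bractE => //; [apply: inC | rewrite -proj2M memS h1].
  have b2 : bract C xb (proj2 w2) = proj2 (g mu lam ^+ k2)%g.
    by apply: bractE => //; [apply: inC | rewrite -proj2M memS h2].
  rewrite b1 b2 in E.
  have h2' : cr (g mu lam * w2)%g (g mu lam ^+ k1)%g = 0.
    by apply/eqP; rewrite -memS E memS h2.
  have := cr_trans (cr_sym h1) (cr_sym h2').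
  move: w1U w2U; rewrite !inE => /andP[/eqP w10 /eqP wd1] /andP[/eqP w20 /eqP wd2].
  rewrite /cr !GL_MxE gEE !mul2E !XE w10 w20 wd1 wd2 => e.
  have d2n : GLval w2 i1 i1 != 0.
    have := det2_neq0 (GL_unitmx w2); rewrite w20 wd2 mulr0 subr0.
    by apply: contra => /eqP ->; rewrite mulr0.
  have e' : GLval w1 i1 i1 * GLval w2 ord0 i1 = GLval w1 ord0 i1 * GLval w2 i1 i1.
    apply: (mulfI (mulf_neq0 l0 l0)); apply/eqP; rewrite -subr_eq0; apply/eqP.
    by rewrite -e; ring.
  apply: (proj2_scale (c := GLval w1 i1 i1 / GLval w2 i1 i1)).
  apply: mat2P; rewrite !mxE ?w10 ?w20 ?wd1 ?wd2 ?mulr0 //; try by rewrite mulfVK.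
  by rewrite mulrAC e' mulfK.
- move=> c1 c2 /setD1P[c1n c1C] /setD1P[c2n c2C].
  have [k1 E1] := Cform c1C; have [k2 E2] := Cform c2C.
  have [a1 [b1 G1]] := gpow Hp k1; have [a2 [b2 G2]] := gpow Hp k2.
  have anz (k : nat) a b : GLval (g mu lam ^+ k)%g = a *: companion2 mu lam + b%:M ->
      proj2 (g mu lam ^+ k)%g != 1%g -> a != 0.
    move=> G; apply: contra => /eqP a0; apply/eqP; apply: coset_id.
    by rewrite inE G a0 scale0r add0r scalar_mx_is_scalar.
  have a1n : a1 != 0 by apply: (anz k1 a1 b1) => //; rewrite -E1.
  have a2n : a2 != 0 by apply: (anz k2 a2 b2) => //; rewrite -E2.
  set be := (- lam * a1 * (- mu * a2 + b2) + lam * a2 * (- mu * a1 + b1)) / (lam * lam * a1 * a2).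
  exists (proj2 (toGL (Sm be))).
    by rewrite projS inE SmE mxE.
  apply: bractE => //; rewrite E1 E2 -proj2M memS /cr GL_MxE SmE G1 G2 !mul2E !abE !mxE /=.
  apply/eqP; rewrite /be; field.
  by rewrite a1n a2n l0.
Qed.
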